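(* Let $p$ be an odd prime and let $G$ be a pro-$p$-group with $G/[G,G]\cong(\mathbb{Z}/p\mathbb{Z})^d$ for some $d\ge 0$. Let $\rho:G\to\mathrm{GL}_n^{(1)}(\mathbb{Z}_p)$ be a continuous homomorphism. If $\rho(G)\ne1$ then $\rho(G)\not\subseteq\mathrm{GL}_n^{(2)}(\mathbb{Z}_p)$.
   Context: $\mathrm{GL}_n^{(k)}(\mathbb{Z}_p)=\{X\in\mathrm{GL}_n(\mathbb{Z}_p): X\equiv 1 \bmod p^k\}$; $[G,G]$ denotes the closed commutator subgroup. *)

(* Defs.v *)
From HB Require Import structures.
From mathcomp Require Import all_boot all_algebra.
From mathcomp Require Import boolp classical_sets topology.

Set Implicit Arguments.
Unset Strict Implicit.
Unset Printing Implicit Defensive.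

Import GRing.Theory.
Local Open Scope classical_set_scope.
Local Open Scope ring_scope.

#[short(type="groupTopType")]
HB.structure Definition GroupTop := {G of Group G & Topological G}.

Section ProP.
Variable G : groupTopType.
Local Open Scope group_scope.

Definition topological_group : Prop :=
  continuous (fun xy : G * G => xy.1 * xy.2) /\ continuous (fun x : G => x^-1).

Definition is_subgroup (H : set G) : Prop :=
  H 1 /\ (forall x y, H x -> H y -> H (x * y)) /\ (forall x, H x -> H x^-1).

Definition is_normal_subgroup (N : set G) : Prop :=
  is_subgroup N /\ (forall x g, N x -> N (g^-1 * x * g)).

(* N (a normal subgroup) has finite index m in G: there is a surjection
   G -> 'I_m whose fibres are exactly the cosets of N. *)
Definition has_index (N : set G) (m : nat) : Prop :=
  exists f : G -> 'I_m, (forall i, exists x, f x = i) /\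
    (forall x y, f x = f y <-> N (x * y^-1)).

Definition pro_p_group (p : nat) : Prop :=
  [/\ topological_group, compact [set: G], hausdorff_space G,
      totally_disconnected [set: G] &
      forall N : set G, open N -> is_normal_subgroup N ->
        exists k : nat, has_index N (p ^ k)].

Definition gen_subgroup (S : set G) : set G :=
  [set g | forall H, is_subgroup H -> S `<=` H -> H g].

Definition closed_commutator : set G :=
  closure (gen_subgroup [set [~ x, y] | x in [set: G] & y in [set: G]]).

(* G / [G,G] is isomorphic to (Z/pZ)^d: a surjective homomorphism onto the
   additive group 'rV['Z_p]_d whose kernel is exactly [G,G]. *)
Definition abelianization_elem_ab (p d : nat) : Prop :=
  exists phi : G -> 'rV['Z_p]_d,
    [/\ forall x y, phi (x * y) = (phi x + phi y)%R,
        forall v, exists x, phi x = v &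
        forall x, phi x = 0%R <-> closed_commutator x].

End ProP.

Definition red_mx (p n k : nat) (A : 'M['Z_(p ^ k.+2)]_n) : 'M['Z_(p ^ k.+1)]_n :=
  map_mx (fun a : 'Z_(p ^ k.+2) => ((a : nat)%:R : 'Z_(p ^ k.+1))) A.

(* GL_n(Z_p) is the inverse limit of GL_n(Z/p^(k+1)Z), k >= 0.  A continuous
   homomorphism rho : G -> GL_n(Z_p) is given by its compatible reductions
   rho k : G -> GL_n(Z/p^(k+1)), each a group homomorphism (hence with
   invertible values) which is continuous for the discrete topology on the
   finite target (preimages of points are open). *)
Definition cont_rep_Zp (G : groupTopType) (p n : nat)
    (rho : forall k : nat, G -> 'M['Z_(p ^ k.+1)]_n) : Prop :=
  [/\ forall k, rho k 1%g = 1%:M,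
      forall k x y, rho k (x * y)%g = rho k x *m rho k y,
      forall k x, red_mx (rho k.+1 x) = rho k x &
      forall k (A : 'M['Z_(p ^ k.+1)]_n), open (rho k @^-1` [set A])].

(* rho(x) lies in GL_n^{(j)}(Z_p) (j >= 1), i.e. rho(x) = 1 mod p^j. *)
Definition in_GLcong (G : groupTopType) (p n : nat)
    (rho : forall k : nat, G -> 'M['Z_(p ^ k.+1)]_n) (j : nat) (x : G) : Prop :=
  rho j.-1 x = 1%:M.

(* Main.v *)
Require Import Defs.
From HB Require Import structures.
From mathcomp Require Import all_boot all_algebra.
From mathcomp Require Import boolp classical_sets topology.
Import GRing.Theory.
Section Helpers.
Local Open Scope classical_set_scope.
Local Open Scope ring_scope.

Lemma mulQ (R : comNzRingType) n (q r : R) (hq : q * r = 0) (A B : 'M[R]_n) :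
  (1%:M + q *: A) *m (1%:M + r *: B) = 1%:M + (q *: A + r *: B).
Proof.
rewrite mulmxDl !mul1mx mulmxDr mulmx1 -scalemxAl -scalemxAr scalerA hq scale0r addr0.
by rewrite -addrA [r *: B + _]addrC.
Qed.

Lemma expQ (R : comNzRingType) n (q : R) (hq : q * q = 0) (A : 'M[R]_n) m :
  (1%:M + q *: A) ^+ m = 1%:M + (q *+ m) *: A.
Proof.
elim: m => [|m IH]; first by rewrite expr0 mulr0n scale0r addr0.
rewrite exprS IH -mulmxE mulQ; last by rewrite mulrnAr hq mul0rn.
by rewrite -scalerDl mulrS.
Qed.

Lemma gt1_exp (p k : nat) : (1 < p)%N -> (1 < p ^ k.+1)%N.
Proof. by move=> hp; have := ltn_exp2l 0 k.+1 hp; rewrite expn0 => ->. Qed.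

Lemma Zp_eq0 (m a : nat) : (1 < m)%N -> (m %| a)%N -> (a%:R : 'Z_m) = 0.
Proof.
move=> hm hd; apply: val_inj; rewrite /= val_Zp_nat //.
by move/eqP: hd.
Qed.

Lemma Zp_eq0_inv (m a : nat) : (1 < m)%N -> (a%:R : 'Z_m) = 0 -> (m %| a)%N.
Proof.
move=> hm /(congr1 val); rewrite /= val_Zp_nat // => h.
by apply/eqP.
Qed.

Lemma entry_dec (p k : nat) (hp : (1 < p)%N) (a : 'Z_(p ^ k.+3)) (b : bool) :
  (((((a : nat)%:R : 'Z_(p ^ k.+2)) : nat)%:R : 'Z_(p ^ k.+1)) = b%:R) ->
  (a : nat) = (b + p ^ k.+1 * ((a : nat) %/ p ^ k.+1))%N.
Proof.
move=> /(congr1 val); rewrite /= !val_Zp_nat ?gt1_exp //.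
rewrite modn_dvdm; last by apply: dvdn_exp2l.
have h1 := gt1_exp p k hp.
rewrite (modn_small (m := b)); last by case: b => //; apply: ltnW.
move=> h; rewrite {1}(divn_eq a (p ^ k.+1)) h mulnC addnC.
by [].
Qed.

Lemma closure_sub (T : topologicalType) (A B : set T) (U : T -> set T) :
  (forall x, open (U x) /\ U x x) ->
  A `<=` B -> (forall x y, U x y -> B y -> B x) -> closure A `<=` B.
Proof.
move=> hU hAB hB x hx.
have [y [Ay Uy]] := hx (U x) (open_nbhs_nbhs (hU x)).
exact: hB x y Uy (hAB y Ay).
Qed.

Lemma step (G : groupTopType) (p n d : nat) (hp : prime p)
  (rho : forall k : nat, G -> 'M['Z_(p ^ k.+1)]_n)
  (Hrho : cont_rep_Zp rho) (phi : G -> 'rV['Z_p]_d)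
  (phiM : forall x y, phi (x * y)%g = phi x + phi y)
  (phiK : forall x, phi x = 0 <-> closed_commutator x)
  (k : nat) (hk : (0 < k)%N) (IH : forall x, rho k x = 1%:M) :
  forall x, rho k.+1 x = 1%:M.
Proof.
have hp1 := prime_gt1 hp.
case: Hrho => Hr1 HrM Hred Hopen.
set q : 'Z_(p ^ k.+3) := (p ^ k.+1)%:R.
have hq : q * q = 0.
  rewrite /q -natrM -expnD; apply: Zp_eq0; first exact: gt1_exp.
  by apply: dvdn_exp2l; rewrite addSn addnS !ltnS -addn1 leq_add2l.
pose Af x := \matrix_(i, j) ((((rho k.+2 x i j : 'Z_(p ^ k.+3)) : nat) %/ p ^ k.+1)%:R : 'Z_(p ^ k.+3)).
have E : forall x i j, ((rho k.+2 x i j : 'Z_(p ^ k.+3)) : nat) =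
    ((i == j) + p ^ k.+1 * ((rho k.+2 x i j : nat) %/ p ^ k.+1))%N.
  move=> x i j; apply: entry_dec => //.
  have := congr1 (fun M : 'M['Z_(p ^ k.+1)]_n => M i j) (IH x).
  rewrite -(Hred k x) -(Hred k.+1 x) /red_mx !mxE => ->.
  reflexivity.
have D : forall x, rho k.+2 x = 1%:M + q *: Af x.
  move=> x; apply/matrixP => i j; rewrite !mxE.
  by rewrite -[LHS]natr_Zp [in LHS]E natrD natrM.
have comm : forall x y, rho k.+2 x *m rho k.+2 y = rho k.+2 y *m rho k.+2 x.
  by move=> x y; rewrite !D !mulQ // [q *: Af x + _]addrC.
have Hinv : forall x, rho k.+2 (x^-1)%g *m rho k.+2 x = 1%:M.
  by move=> x; rewrite -HrM mulVg Hr1.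
pose K := [set y : G | rho k.+2 y = 1%:M].
have Ksub : is_subgroup K.
  split; first exact: Hr1.
  split.
  - by move=> x y; rewrite /K /= => hx hy; rewrite HrM hx hy mul1mx.
  - by move=> x; rewrite /K /= => hx; rewrite -(Hinv x) hx mulmx1.
have Kcomm : forall x y, K [~ x, y]%g.
  move=> x y; rewrite /K /= /commg /conjg !HrM (comm x y).
  by rewrite (mulmxA (rho k.+2 y^-1%g)) Hinv mul1mx Hinv.
have Kclosed : closed_commutator (G:=G) `<=` K.
  apply: (@closure_sub _ _ _ (fun x => rho k.+2 @^-1` [set rho k.+2 x])).
  - by move=> x; split; [exact: Hopen | by []].
  - move=> g hg; apply: hg Ksub _.
    by move=> _ [a _ [b _ <-]]; exact: Kcomm.
  - by move=> x y /= hxy hy; rewrite /K /= -hxy.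
have powr : forall x m, rho k.+2 (x ^+ m)%g = rho k.+2 x ^+ m.
  move=> x; elim => [|m IHm]; first by rewrite expg0 Hr1 expr0.
  by rewrite expgS HrM IHm exprS mulmxE.
have phi1 : phi 1%g = 0.
  have h := phiM 1%g 1%g; rewrite mulg1 in h.
  by move/(congr1 (fun v => v - phi 1%g)): h; rewrite addrK subrr.
have powphi : forall x m, phi (x ^+ m)%g = phi x *+ m.
  move=> x; elim=> [|m IHm]; first by rewrite expg0 mulr0n.
  by rewrite expgS phiM IHm mulrS.
have Xp : forall x, rho k.+2 x ^+ p = 1%:M.
  move=> x; rewrite -powr; apply: Kclosed; apply/phiK.
  by rewrite powphi -scaler_nat pchar_Zp // scale0r.
move=> x.
have hA := Xp x; rewrite D expQ // in hA.
have hA0 : (q *+ p) *: Af x = 0.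
  by apply: (addrI 1%:M); rewrite addr0.
rewrite -(Hred k.+1 x); apply/matrixP => i j.
have := congr1 (fun M : 'M['Z_(p ^ k.+3)]_n => M i j) hA0; rewrite !mxE => hc.
have e1 : (p ^ k.+1)%:R *+ p = ((p ^ k.+1 * p)%N%:R : 'Z_(p ^ k.+3)).
  by rewrite natrM mulr_natr.
rewrite /q e1 -natrM in hc.
have hdiv := Zp_eq0_inv _ _ (gt1_exp p k.+2 hp1) hc.
have {}hdiv : (p %| (rho k.+2 x i j %/ p ^ k.+1))%N.
  move: hdiv; move: (_ %/ _)%N => c.
  by rewrite -expnSr (expnSr p k.+2) dvdn_pmul2l // expn_gt0 (ltnW hp1).
apply: val_inj; rewrite /= !val_Zp_nat ?gt1_exp //.
rewrite E; move: hdiv => /dvdnP [c' ->].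
by rewrite [(p ^ k.+1 * _)%N]mulnC -mulnA -expnS addnC modnMDl.
Qed.

End Helpers.

Theorem lemma3p2 (p : nat) (Hp : prime p) (Hodd : odd p)
  (G : groupTopType) (d : nat)
  (HG : pro_p_group G p)
  (Hab : abelianization_elem_ab G p d)
  (n : nat) (rho : forall k : nat, G -> 'M['Z_(p ^ k.+1)]_n)
  (Hrho : cont_rep_Zp rho)
  (H1 : forall x : G, in_GLcong rho 1 x)
  (Hnontriv : exists (k : nat) (x : G), (rho k x <> 1%:M)%R) :
  ~ (forall x : G, in_GLcong rho 2 x).
Proof.
move=> Hall.
case: Hab => phi [phiM _ phiK].
have all : forall k x, rho k x = (1%:M)%R.
  elim=> [|[|k] IHk].
  - exact: H1.
  - exact: Hall.
  - move=> x; exact: (@step G p n d Hp rho Hrho phi phiM phiK k.+1 isT IHk x).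
by case: Hnontriv => k [x]; apply; apply: all.
Qed.
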